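(* The following three conjugacies hold. (1) Let $\varphi_1:\operatorname{span}_{\mathbb{R}}\{1,\mathbf{i_1},\mathbf{i_2},\mathbf{j_1}\}\to\operatorname{span}_{\mathbb{R}}\{\mathbf{i_1},\mathbf{i_2},\mathbf{j_2},\mathbf{j_3}\}$, $\varphi_1(x_1+x_2\mathbf{i_1}+x_3\mathbf{i_2}+x_4\mathbf{j_1})=x_2\mathbf{i_1}+x_3\mathbf{i_2}+x_1\mathbf{j_2}-x_4\mathbf{j_3}$. For all real $c_1,c_2,c_3$, with $c=c_1+c_2\mathbf{i_1}+c_3\mathbf{i_2}$ and $c'=\varphi_1(c)=c_2\mathbf{i_1}+c_3\mathbf{i_2}+c_1\mathbf{j_2}$, we have $\varphi_1\circ Q_{3,c}\circ\varphi_1^{-1}=Q_{3,c'}$ on the codomain of $\varphi_1$. (2) Let $\varphi_2:\operatorname{span}_{\mathbb{R}}\{1,\mathbf{i_1},\mathbf{i_2},\mathbf{j_1}\}\to\operatorname{span}_{\mathbb{R}}\{\mathbf{i_1},\mathbf{j_1},\mathbf{j_2},\mathbf{i_4}\}$, $\varphi_2(x_1+x_2\mathbf{i_1}-x_3\mathbf{i_2}+x_4\mathbf{j_1})=x_2\mathbf{i_1}+x_4\mathbf{j_1}+x_1\mathbf{j_2}-x_3\mathbf{i_4}$. For all real $c_1,c_2,c_3$, with $c=c_1+c_2\mathbf{i_1}+c_3\mathbf{j_1}$ and $c'=\varphi_2(c)=c_2\mathbf{i_1}+c_3\mathbf{j_1}+c_1\mathbf{j_2}$, we have $\varphi_2\circ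 Q_{3,c}\circ\varphi_2^{-1}=Q_{3,c'}$ on the codomain of $\varphi_2$. (3) Let $\varphi_3:\operatorname{span}_{\mathbb{R}}\{1,\mathbf{j_1},\mathbf{j_2},\mathbf{j_3}\}\to\operatorname{span}_{\mathbb{R}}\{1,\mathbf{j_1},\mathbf{j_2},\mathbf{j_3}\}$, $\varphi_3(x_1+x_2\mathbf{j_1}+x_3\mathbf{j_2}-x_4\mathbf{j_3})=-x_4+x_1\mathbf{j_1}+x_2\mathbf{j_2}+x_3\mathbf{j_3}$. For all real $c_1,c_2,c_3$, with $c=c_1+c_2\mathbf{j_1}+c_3\mathbf{j_2}$ and $c'=\varphi_3(c)=c_1\mathbf{j_1}+c_2\mathbf{j_2}+c_3\mathbf{j_3}$, we have $\varphi_3\circ Q_{3,c}\circ\varphi_3^{-1}=Q_{3,c'}$. Consequently $\mathcal{T}^3(\mathbf{i_1},\mathbf{i_2},\mathbf{j_2})=\varphi_1(\mathcal{T}^3(1,\mathbf{i_1},\mathbf{i_2}))$, $\mathcal{T}^3(\mathbf{i_1},\mathbf{j_1},\mathbf{j_2})=\varphi_2(\mathcal{T}^3(1,\mathbf{i_1},\mathbf{j_1}))$ and $\mathcal{T}^3(\mathbf{j_1},\mathbf{j_2},\mathbf{j_3})=\varphi_3(\mathcal{T}^3(1,\mathbf{j_1},\mathbf{j_2}))$; i.e. these pairs of slices have the same dynamics.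
   Context: The tricomplex numbers $\mathbb{M}(3)$ form the commutative real algebra generated by commuting units $\mathbf{i_1},\mathbf{i_2},\mathbf{i_3}$ with $\mathbf{i_k}^2=-1$; set $\mathbf{j_1}=\mathbf{i_1}\mathbf{i_2}$, $\mathbf{j_2}=\mathbf{i_1}\mathbf{i_3}$, $\mathbf{j_3}=\mathbf{i_2}\mathbf{i_3}$, $\mathbf{i_4}=\mathbf{i_1}\mathbf{i_2}\mathbf{i_3}$, with real basis $1,\mathbf{i_1},\mathbf{i_2},\mathbf{i_3},\mathbf{i_4},\mathbf{j_1},\mathbf{j_2},\mathbf{j_3}$ and Euclidean norm on coordinates. For $c\in\mathbb{M}(3)$, $Q_{3,c}(\eta)=\eta^3+c$ and $Q_{3,c}^m$ is its $m$-fold iterate. For three distinct units $u,v,w$ among $1,\mathbf{i_1},\dots,\mathbf{i_4},\mathbf{j_1},\mathbf{j_2},\mathbf{j_3}$, the 3D slice is $\mathcal{T}^3(u,v,w)=\{c\in\operatorname{span}_{\mathbb{R}}\{u,v,w\} : (Q_{3,c}^m(0))_{m\geq1}\text{ is bounded}\}$. *)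

(* Defs.v *)
From Stdlib Require Import Reals List.
Import ListNotations.
Open Scope R_scope.

(* An element of M(3) is given by its 8 real coordinates on the monomials
   i1^a i2^b i3^c (a,b,c in {0,1}); field tabc = coefficient of i1^a i2^b i3^c.
   So t000 ~ 1, t100 ~ i1, t010 ~ i2, t001 ~ i3, t110 ~ j1 = i1 i2,
   t101 ~ j2 = i1 i3, t011 ~ j3 = i2 i3, t111 ~ i4 = i1 i2 i3. *)
Record TC : Type := mkTC {
  t000 : R; t100 : R; t010 : R; t001 : R;
  t110 : R; t101 : R; t011 : R; t111 : R }.

Definition idx : Type := (bool * bool * bool)%type.

Definition get (x : TC) (k : idx) : R :=
  match k with
  | (false, false, false) => t000 x
  | (true,  false, false) => t100 x
  | (false, true,  false) => t010 x
  | (false, false, true ) => t001 x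
  | (true,  true,  false) => t110 x
  | (true,  false, true ) => t101 x
  | (false, true,  true ) => t011 x
  | (true,  true,  true ) => t111 x
  end.

Definition mk (f : idx -> R) : TC :=
  mkTC (f (false,false,false)) (f (true,false,false)) (f (false,true,false))
       (f (false,false,true)) (f (true,true,false)) (f (true,false,true))
       (f (false,true,true)) (f (true,true,true)).

Definition all_idx : list idx :=
  (false,false,false) :: (true,false,false) :: (false,true,false) ::
  (false,false,true) :: (true,true,false) :: (true,false,true) ::
  (false,true,true) :: (true,true,true) :: nil.

Definition ixor (a b : idx) : idx :=
  match a, b with
  | (a1,a2,a3), (b1,b2,b3) => (xorb a1 b1, xorb a2 b2, xorb a3 b3)
  end.

(* i1^a i2^b i3^c * i1^a' i2^b' i3^c' = (-1)^#{k | a_k = a'_k = 1} * monomial of the xor,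
   since the units commute and square to -1. *)
Definition bsgn (b : bool) : R := if b then -1 else 1.
Definition sgn (a b : idx) : R :=
  match a, b with
  | (a1,a2,a3), (b1,b2,b3) => bsgn (andb a1 b1) * bsgn (andb a2 b2) * bsgn (andb a3 b3)
  end.

Definition tadd (x y : TC) : TC := mk (fun k => get x k + get y k).
Definition tscale (r : R) (x : TC) : TC := mk (fun k => r * get x k).
Definition tmul (x y : TC) : TC :=
  mk (fun k => fold_right Rplus 0
        (map (fun i => sgn i (ixor i k) * get x i * get y (ixor i k)) all_idx)).

Definition tzero : TC := mk (fun _ => 0).
Definition basis (k : idx) : TC := mk (fun j => if (match j, k with
  | (a1,a2,a3), (b1,b2,b3) => andb (Bool.eqb a1 b1) (andb (Bool.eqb a2 b2) (Bool.eqb a3 b3)) end)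
  then 1 else 0).

Definition one : TC := basis (false,false,false).
Definition i1 : TC := basis (true,false,false).
Definition i2 : TC := basis (false,true,false).
Definition i3 : TC := basis (false,false,true).
Definition j1 : TC := tmul i1 i2.
Definition j2 : TC := tmul i1 i3.
Definition j3 : TC := tmul i2 i3.
Definition i4 : TC := tmul (tmul i1 i2) i3.

Definition tnorm (x : TC) : R :=
  sqrt (fold_right Rplus 0 (map (fun k => get x k * get x k) all_idx)).

Definition Q3 (c eta : TC) : TC := tadd (tmul (tmul eta eta) eta) c.
Definition Q3iter (c : TC) (m : nat) (eta : TC) : TC := Nat.iter m (Q3 c) eta.

Definition bounded_orbit (c : TC) : Prop :=
  exists M : R, forall m : nat, (1 <= m)%nat -> tnorm (Q3iter c m tzero) <= M.

Definition span3 (u v w x : TC) : Prop :=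
  exists a b d : R, x = tadd (tadd (tscale a u) (tscale b v)) (tscale d w).
Definition span4 (u v w z x : TC) : Prop :=
  exists a b d e : R,
    x = tadd (tadd (tadd (tscale a u) (tscale b v)) (tscale d w)) (tscale e z).

Definition T3 (u v w c : TC) : Prop := span3 u v w c /\ bounded_orbit c.

Definition lc4 (a : R) (u : TC) (b : R) (v : TC) (d : R) (w : TC) (e : R) (z : TC) : TC :=
  tadd (tadd (tadd (tscale a u) (tscale b v)) (tscale d w)) (tscale e z).

Definition phi1 (eta : TC) : TC :=
  let x1 := t000 eta in let x2 := t100 eta in let x3 := t010 eta in let x4 := t110 eta in
  lc4 x2 i1 x3 i2 x1 j2 (- x4) j3.

Definition phi2 (eta : TC) : TC :=
  let x1 := t000 eta in let x2 := t100 eta in let x3 := - t010 eta in let x4 := t110 eta in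
  lc4 x2 i1 x4 j1 x1 j2 (- x3) i4.

Definition phi3 (eta : TC) : TC :=
  let x1 := t000 eta in let x2 := t110 eta in let x3 := t101 eta in let x4 := - t011 eta in
  lc4 (- x4) one x1 j1 x2 j2 x3 j3.

(* phi : D -> D' is a bijection and conjugates Q_{3,c} (on D) to Q_{3,phi c} (on D'),
   i.e. phi o Q_c o phi^{-1} = Q_{c'} on D'. *)
Definition conj_bij (D D' : TC -> Prop) (phi : TC -> TC) : Prop :=
  (forall eta, D eta -> D' (phi eta)) /\
  (forall y, D' y -> exists eta, D eta /\ phi eta = y /\
                       forall eta', D eta' -> phi eta' = y -> eta' = eta).

Definition conjugates (D : TC -> Prop) (phi : TC -> TC) (c c' : TC) : Prop :=
  phi c = c' /\
  forall eta, D eta -> D (Q3 c eta) /\ phi (Q3 c eta) = Q3 c' (phi eta).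

(* Main.v *)
Require Import Defs.
From Stdlib Require Import Reals Lra.
Open Scope R_scope.

Ltac ev := cbv beta iota zeta delta [phi1 phi2 phi3 Q3 lc4 tadd tscale tmul one i1 i2 i3 j1 j2 j3 i4 basis mk get all_idx List.map List.fold_right sgn bsgn ixor xorb andb Bool.eqb t000 t100 t010 t001 t110 t101 t011 t111].

Definition mulf (x000 x100 x010 x001 x110 x101 x011 x111 y000 y100 y010 y001 y110 y101 y011 y111 : R) : TC :=
  mkTC (x000 * y000 - x100 * y100 - x010 * y010 - x001 * y001 + x110 * y110 + x101 * y101 + x011 * y011 - x111 * y111)
   (x000 * y100 + x100 * y000 - x010 * y110 - x001 * y101 - x110 * y010 - x101 * y001 + x011 * y111 + x111 * y011)
   (x000 * y010 - x100 * y110 + x010 * y000 - x001 * y011 - x110 * y100 + x101 * y111 - x011 * y001 + x111 * y101)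
   (x000 * y001 - x100 * y101 - x010 * y011 + x001 * y000 + x110 * y111 - x101 * y100 - x011 * y010 + x111 * y110)
   (x000 * y110 + x100 * y010 + x010 * y100 - x001 * y111 + x110 * y000 - x101 * y011 - x011 * y101 - x111 * y001)
   (x000 * y101 + x100 * y001 - x010 * y111 + x001 * y100 - x110 * y011 + x101 * y000 - x011 * y110 - x111 * y010)
   (x000 * y011 - x100 * y111 + x010 * y001 + x001 * y010 - x110 * y101 - x101 * y110 + x011 * y000 - x111 * y100)
   (x000 * y111 + x100 * y011 + x010 * y101 + x001 * y110 + x110 * y001 + x101 * y010 + x011 * y100 + x111 * y000).

Lemma tmul_mk a0 a1 a2 a3 a4 a5 a6 a7 b0 b1 b2 b3 b4 b5 b6 b7 :
  tmul (mkTC a0 a1 a2 a3 a4 a5 a6 a7) (mkTC b0 b1 b2 b3 b4 b5 b6 b7) =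
  mulf a0 a1 a2 a3 a4 a5 a6 a7 b0 b1 b2 b3 b4 b5 b6 b7.
Proof. ev; unfold mulf; f_equal; ring. Qed.

Lemma tadd_mk a0 a1 a2 a3 a4 a5 a6 a7 b0 b1 b2 b3 b4 b5 b6 b7 :
  tadd (mkTC a0 a1 a2 a3 a4 a5 a6 a7) (mkTC b0 b1 b2 b3 b4 b5 b6 b7) =
  mkTC (a0+b0) (a1+b1) (a2+b2) (a3+b3) (a4+b4) (a5+b5) (a6+b6) (a7+b7).
Proof. reflexivity. Qed.

Lemma tscale_mk r a0 a1 a2 a3 a4 a5 a6 a7 :
  tscale r (mkTC a0 a1 a2 a3 a4 a5 a6 a7) =
  mkTC (r*a0) (r*a1) (r*a2) (r*a3) (r*a4) (r*a5) (r*a6) (r*a7).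
Proof. reflexivity. Qed.

Lemma one_eq : one = mkTC 1 0 0 0 0 0 0 0. Proof. reflexivity. Qed.
Lemma i1_eq : i1 = mkTC 0 1 0 0 0 0 0 0. Proof. reflexivity. Qed.
Lemma i2_eq : i2 = mkTC 0 0 1 0 0 0 0 0. Proof. reflexivity. Qed.
Lemma i3_eq : i3 = mkTC 0 0 0 1 0 0 0 0. Proof. reflexivity. Qed.
Lemma j1_eq : j1 = mkTC 0 0 0 0 1 0 0 0.
Proof. unfold j1; rewrite i1_eq, i2_eq, tmul_mk; unfold mulf; f_equal; ring. Qed.
Lemma j2_eq : j2 = mkTC 0 0 0 0 0 1 0 0.
Proof. unfold j2; rewrite i1_eq, i3_eq, tmul_mk; unfold mulf; f_equal; ring. Qed.
Lemma j3_eq : j3 = mkTC 0 0 0 0 0 0 1 0.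
Proof. unfold j3; rewrite i2_eq, i3_eq, tmul_mk; unfold mulf; f_equal; ring. Qed.
Lemma i4_eq : i4 = mkTC 0 0 0 0 0 0 0 1.
Proof. unfold i4; rewrite i1_eq, i2_eq, i3_eq, !tmul_mk; unfold mulf; rewrite tmul_mk; unfold mulf; f_equal; ring. Qed.
Lemma tzero_eq : tzero = mkTC 0 0 0 0 0 0 0 0. Proof. reflexivity. Qed.

Ltac norm_tc :=
  unfold Q3, phi1, phi2, phi3, lc4 in *;
  rewrite ?one_eq, ?i1_eq, ?i2_eq, ?i3_eq, ?j1_eq, ?j2_eq, ?j3_eq, ?i4_eq, ?tzero_eq in *;
  repeat (first [rewrite tmul_mk in * | rewrite tadd_mk in * | rewrite tscale_mk in * | progress unfold mulf in *]);
  cbn [t000 t100 t010 t001 t110 t101 t011 t111] in *.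
Lemma spanA x : span4 one i1 i2 j1 x <-> (t001 x = 0 /\ t101 x = 0 /\ t011 x = 0 /\ t111 x = 0).
Proof.
  destruct x as [x0 x1 x2 x3 x4 x5 x6 x7]; cbn; split.
  - intros [a [b [d [e H]]]]; norm_tc; injection H; intros; subst; lra.
  - intros (H3 & H5 & H6 & H7); subst; exists x0, x1, x2, x4; norm_tc; f_equal; ring.
Qed.
Lemma spanB x : span4 i1 i2 j2 j3 x <-> (t000 x = 0 /\ t001 x = 0 /\ t110 x = 0 /\ t111 x = 0).
Proof.
  destruct x as [x0 x1 x2 x3 x4 x5 x6 x7]; cbn; split.
  - intros [a [b [d [e H]]]]; norm_tc; injection H; intros; subst; lra.
  - intros (H3 & H5 & H6 & H7); subst; exists x1, x2, x5, x6; norm_tc; f_equal; ring.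
Qed.
Lemma spanC x : span4 i1 j1 j2 i4 x <-> (t000 x = 0 /\ t010 x = 0 /\ t001 x = 0 /\ t011 x = 0).
Proof.
  destruct x as [x0 x1 x2 x3 x4 x5 x6 x7]; cbn; split.
  - intros [a [b [d [e H]]]]; norm_tc; injection H; intros; subst; lra.
  - intros (H3 & H5 & H6 & H7); subst; exists x1, x4, x5, x7; norm_tc; f_equal; ring.
Qed.
Lemma spanE x : span4 one j1 j2 j3 x <-> (t100 x = 0 /\ t010 x = 0 /\ t001 x = 0 /\ t111 x = 0).
Proof.
  destruct x as [x0 x1 x2 x3 x4 x5 x6 x7]; cbn; split.
  - intros [a [b [d [e H]]]]; norm_tc; injection H; intros; subst; lra.
  - intros (H3 & H5 & H6 & H7); subst; exists x0, x4, x5, x6; norm_tc; f_equal; ring.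
Qed.

Lemma conjB1 : conj_bij (span4 one i1 i2 j1) (span4 i1 i2 j2 j3) phi1.
Proof.
  split.
  - intros eta; rewrite spanA, spanB; destruct eta as [x0 x1 x2 x3 x4 x5 x6 x7]; cbn;
    intros (H3 & H5 & H6 & H7); subst; norm_tc; repeat split; ring.
  - intros y; rewrite spanB; destruct y as [x0 x1 x2 x3 x4 x5 x6 x7]; cbn;
    intros (H3 & H5 & H6 & H7); subst.
    exists (mkTC x5 x1 x2 0 (- x6) 0 0 0); split; [rewrite spanA; cbn; lra|]; split.
    + norm_tc; f_equal; ring.
    + intros eta'; rewrite spanA; destruct eta' as [y0 y1 y2 y3 y4 y5 y6 y7]; cbn;
      intros (H3 & H5 & H6 & H7) H; subst; norm_tc; injection H; intros; f_equal; lra.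
Qed.
Lemma conjB2 : conj_bij (span4 one i1 i2 j1) (span4 i1 j1 j2 i4) phi2.
Proof.
  split.
  - intros eta; rewrite spanA, spanC; destruct eta as [x0 x1 x2 x3 x4 x5 x6 x7]; cbn;
    intros (H3 & H5 & H6 & H7); subst; norm_tc; repeat split; ring.
  - intros y; rewrite spanC; destruct y as [x0 x1 x2 x3 x4 x5 x6 x7]; cbn;
    intros (H3 & H5 & H6 & H7); subst.
    exists (mkTC x5 x1 x7 0 x4 0 0 0); split; [rewrite spanA; cbn; lra|]; split.
    + norm_tc; f_equal; ring.
    + intros eta'; rewrite spanA; destruct eta' as [y0 y1 y2 y3 y4 y5 y6 y7]; cbn;
      intros (H3 & H5 & H6 & H7) H; subst; norm_tc; injection H; intros; f_equal; lra.
Qed.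
Lemma conjB3 : conj_bij (span4 one j1 j2 j3) (span4 one j1 j2 j3) phi3.
Proof.
  split.
  - intros eta; rewrite !spanE; destruct eta as [x0 x1 x2 x3 x4 x5 x6 x7]; cbn;
    intros (H3 & H5 & H6 & H7); subst; norm_tc; repeat split; ring.
  - intros y; rewrite spanE; destruct y as [x0 x1 x2 x3 x4 x5 x6 x7]; cbn;
    intros (H3 & H5 & H6 & H7); subst.
    exists (mkTC x4 0 0 0 x5 x6 x0 0); split; [rewrite spanE; cbn; lra|]; split.
    + norm_tc; f_equal; ring.
    + intros eta'; rewrite spanE; destruct eta' as [y0 y1 y2 y3 y4 y5 y6 y7]; cbn;
      intros (H3 & H5 & H6 & H7) H; subst; norm_tc; injection H; intros; f_equal; lra.
Qed.

Lemma conjQ1 c1 c2 c3 : conjugates (span4 one i1 i2 j1) phi1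
       (tadd (tadd (tscale c1 one) (tscale c2 i1)) (tscale c3 i2))
       (tadd (tadd (tscale c2 i1) (tscale c3 i2)) (tscale c1 j2)).
Proof.
  split; [norm_tc; f_equal; ring|].
  intros eta; rewrite !spanA; destruct eta as [x0 x1 x2 x3 x4 x5 x6 x7]; cbn;
  intros (H3 & H5 & H6 & H7); subst; norm_tc; split; [repeat split; ring | f_equal; ring].
Qed.
Lemma conjQ2 c1 c2 c3 : conjugates (span4 one i1 i2 j1) phi2
       (tadd (tadd (tscale c1 one) (tscale c2 i1)) (tscale c3 j1))
       (tadd (tadd (tscale c2 i1) (tscale c3 j1)) (tscale c1 j2)).
Proof.
  split; [norm_tc; f_equal; ring|].
  intros eta; rewrite !spanA; destruct eta as [x0 x1 x2 x3 x4 x5 x6 x7]; cbn;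
  intros (H3 & H5 & H6 & H7); subst; norm_tc; split; [repeat split; ring | f_equal; ring].
Qed.
Lemma conjQ3 c1 c2 c3 : conjugates (span4 one j1 j2 j3) phi3
       (tadd (tadd (tscale c1 one) (tscale c2 j1)) (tscale c3 j2))
       (tadd (tadd (tscale c1 j1) (tscale c2 j2)) (tscale c3 j3)).
Proof.
  split; [norm_tc; f_equal; ring|].
  intros eta; rewrite !spanE; destruct eta as [x0 x1 x2 x3 x4 x5 x6 x7]; cbn;
  intros (H3 & H5 & H6 & H7); subst; norm_tc; split; [repeat split; ring | f_equal; ring].
Qed.

Lemma transfer D phi c c' : conjugates D phi c c' -> D tzero -> phi tzero = tzero ->
  (forall x, D x -> tnorm (phi x) = tnorm x) -> (bounded_orbit c <-> bounded_orbit c').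
Proof.
  intros [_ Hc] H0 Hp0 Hn.
  assert (K : forall m, D (Q3iter c m tzero) /\ phi (Q3iter c m tzero) = Q3iter c' m tzero).
  { induction m as [|m [IH1 IH2]].
    - split; [exact H0 | exact Hp0].
    - change (Q3iter c (S m) tzero) with (Q3 c (Q3iter c m tzero)).
      change (Q3iter c' (S m) tzero) with (Q3 c' (Q3iter c' m tzero)).
      destruct (Hc _ IH1) as [A B]; split; [exact A|]; rewrite B, IH2; reflexivity. }
  assert (E : forall m, tnorm (Q3iter c' m tzero) = tnorm (Q3iter c m tzero)).
  { intros m; destruct (K m) as [A B]; rewrite <- B; apply Hn; exact A. }
  split; intros [M HM]; exists M; intros m Hm; specialize (HM m Hm); first [rewrite E; exact HM | rewrite <- E; exact HM].
Qed.

Ltac tn := unfold tnorm; cbv beta iota zeta delta [all_idx List.map List.fold_right get t000 t100 t010 t001 t110 t101 t011 t111].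

Lemma norm1 x : span4 one i1 i2 j1 x -> tnorm (phi1 x) = tnorm x.
Proof. rewrite spanA; destruct x as [x0 x1 x2 x3 x4 x5 x6 x7]; cbn; intros (?&?&?&?); subst.
  norm_tc; tn; apply f_equal; ring. Qed.
Lemma norm2 x : span4 one i1 i2 j1 x -> tnorm (phi2 x) = tnorm x.
Proof. rewrite spanA; destruct x as [x0 x1 x2 x3 x4 x5 x6 x7]; cbn; intros (?&?&?&?); subst.
  norm_tc; tn; apply f_equal; ring. Qed.
Lemma norm3 x : span4 one j1 j2 j3 x -> tnorm (phi3 x) = tnorm x.
Proof. rewrite spanE; destruct x as [x0 x1 x2 x3 x4 x5 x6 x7]; cbn; intros (?&?&?&?); subst.
  norm_tc; tn; apply f_equal; ring. Qed.

Lemma zA : span4 one i1 i2 j1 tzero. Proof. rewrite spanA, tzero_eq; cbn; lra. Qed.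
Lemma zE : span4 one j1 j2 j3 tzero. Proof. rewrite spanE, tzero_eq; cbn; lra. Qed.
Lemma p1z : phi1 tzero = tzero. Proof. norm_tc; f_equal; ring. Qed.
Lemma p2z : phi2 tzero = tzero. Proof. norm_tc; f_equal; ring. Qed.
Lemma p3z : phi3 tzero = tzero. Proof. norm_tc; f_equal; ring. Qed.

Theorem mainTheorem16 :
  (* (1) *)
  (conj_bij (span4 one i1 i2 j1) (span4 i1 i2 j2 j3) phi1 /\
   forall c1 c2 c3 : R,
     conjugates (span4 one i1 i2 j1) phi1
       (tadd (tadd (tscale c1 one) (tscale c2 i1)) (tscale c3 i2))
       (tadd (tadd (tscale c2 i1) (tscale c3 i2)) (tscale c1 j2))) /\
  (* (2) *)
  (conj_bij (span4 one i1 i2 j1) (span4 i1 j1 j2 i4) phi2 /\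
   forall c1 c2 c3 : R,
     conjugates (span4 one i1 i2 j1) phi2
       (tadd (tadd (tscale c1 one) (tscale c2 i1)) (tscale c3 j1))
       (tadd (tadd (tscale c2 i1) (tscale c3 j1)) (tscale c1 j2))) /\
  (* (3) *)
  (conj_bij (span4 one j1 j2 j3) (span4 one j1 j2 j3) phi3 /\
   forall c1 c2 c3 : R,
     conjugates (span4 one j1 j2 j3) phi3
       (tadd (tadd (tscale c1 one) (tscale c2 j1)) (tscale c3 j2))
       (tadd (tadd (tscale c1 j1) (tscale c2 j2)) (tscale c3 j3))) /\
  (* consequences: equality of slices *)
  (forall c', T3 i1 i2 j2 c' <-> exists c, T3 one i1 i2 c /\ phi1 c = c') /\
  (forall c', T3 i1 j1 j2 c' <-> exists c, T3 one i1 j1 c /\ phi2 c = c') /\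
  (forall c', T3 j1 j2 j3 c' <-> exists c, T3 one j1 j2 c /\ phi3 c = c').
Proof.
  split; [split; [exact conjB1 | exact conjQ1]|].
  split; [split; [exact conjB2 | exact conjQ2]|].
  split; [split; [exact conjB3 | exact conjQ3]|].
  split; [|split].
  - intros c'; split.
    + intros [[a [b [d Hc']]] Hb].
      exists (tadd (tadd (tscale d one) (tscale a i1)) (tscale b i2)).
      split; [split; [exists d, a, b; reflexivity|] | rewrite Hc'; exact (proj1 (conjQ1 d a b))].
      apply (proj2 (transfer _ _ _ _ (conjQ1 d a b) zA p1z norm1)); subst c'; exact Hb.
    + intros [c [[[a [b [d Hc]]] Hb] Hp]]; subst c.
      rewrite <- Hp, (proj1 (conjQ1 a b d)); split; [exists b, d, a; reflexivity|].
      exact (proj1 (transfer _ _ _ _ (conjQ1 a b d) zA p1z norm1) Hb).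
  - intros c'; split.
    + intros [[a [b [d Hc']]] Hb].
      exists (tadd (tadd (tscale d one) (tscale a i1)) (tscale b j1)).
      split; [split; [exists d, a, b; reflexivity|] | rewrite Hc'; exact (proj1 (conjQ2 d a b))].
      apply (proj2 (transfer _ _ _ _ (conjQ2 d a b) zA p2z norm2)); subst c'; exact Hb.
    + intros [c [[[a [b [d Hc]]] Hb] Hp]]; subst c.
      rewrite <- Hp, (proj1 (conjQ2 a b d)); split; [exists b, d, a; reflexivity|].
      exact (proj1 (transfer _ _ _ _ (conjQ2 a b d) zA p2z norm2) Hb).
  - intros c'; split.
    + intros [[a [b [d Hc']]] Hb].
      exists (tadd (tadd (tscale a one) (tscale b j1)) (tscale d j2)).
      split; [split; [exists a, b, d; reflexivity|] | rewrite Hc'; exact (proj1 (conjQ3 a b d))].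
      apply (proj2 (transfer _ _ _ _ (conjQ3 a b d) zE p3z norm3)); subst c'; exact Hb.
    + intros [c [[[a [b [d Hc]]] Hb] Hp]]; subst c.
      rewrite <- Hp, (proj1 (conjQ3 a b d)); split; [exists a, b, d; reflexivity|].
      exact (proj1 (transfer _ _ _ _ (conjQ3 a b d) zE p3z norm3) Hb).
Qed.
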